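(* Consider the symmetric two-user channel $a=c>0$, $b=d>0$, with $P_{\max}>0$. If $$b\ge\frac{\sqrt{1+aP_{\max}}}{P_{\max}},$$ then operating via TDM is optimal: the convex hull of the power-control rate region equals the triangle with vertices $(0,0)$, $(0,\log_2(1+aP_{\max}))$ and $(\log_2(1+aP_{\max}),0)$.
   Context: This is the two-user interference channel with interference treated as noise. The rates are $R_1(P_1,P_2)=\log_2\!\left(1+\frac{aP_1}{1+bP_2}\right)$ and $R_2(P_1,P_2)=\log_2\!\left(1+\frac{cP_2}{1+dP_1}\right)$, with $P_1,P_2\in[0,P_{\max}]$. The gains are normalized by the noise variance: $a,c$ are direct gains and $b,d$ are interference gains. The power-control rate region is $\{(r_1,r_2)\in\mathbb R^2_{\ge0}: \exists (P_1,P_2)\in[0,P_{\max}]^2,\ r_1\le R_1(P_1,P_2),\ r_2\le R_2(P_1,P_2)\}$. *)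

(* Defs.v *)
From Stdlib Require Import Reals Lra.
Open Scope R_scope.

Definition log2 (x : R) : R := ln x / ln 2.

(* Rates with interference treated as noise. *)
Definition R1 (a b P1 P2 : R) : R := log2 (1 + a * P1 / (1 + b * P2)).
Definition R2 (c d P1 P2 : R) : R := log2 (1 + c * P2 / (1 + d * P1)).

Definition rate_region (a b c d Pmax : R) (r : R * R) : Prop :=
  0 <= fst r /\ 0 <= snd r /\
  exists P1 P2, 0 <= P1 <= Pmax /\ 0 <= P2 <= Pmax /\
    fst r <= R1 a b P1 P2 /\ snd r <= R2 c d P1 P2.

Definition convex (C : R * R -> Prop) : Prop :=
  forall x y t, C x -> C y -> 0 <= t <= 1 ->
    C (t * fst x + (1 - t) * fst y, t * snd x + (1 - t) * snd y).

Definition conv_hull (S : R * R -> Prop) (p : R * R) : Prop :=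
  forall C, convex C -> (forall q, S q -> C q) -> C p.

Definition closed_triangle (u v w : R * R) : R * R -> Prop :=
  conv_hull (fun q => q = u \/ q = v \/ q = w).

(* Main.v *)
Require Import Defs.
From Stdlib Require Import Reals Lra Psatz.
Open Scope R_scope.

Lemma ln_le' x y : 0 < x -> x <= y -> ln x <= ln y.
Proof. intros Hx [H|H]. left; apply ln_increasing; auto. subst; lra. Qed.

Lemma ln2_pos : 0 < ln 2.
Proof. rewrite <- ln_1. apply ln_increasing; lra. Qed.

Lemma log2_le x y : 0 < x -> x <= y -> log2 x <= log2 y.
Proof. intros. unfold log2. apply Rmult_le_compat_r.
  left; apply Rinv_0_lt_compat, ln2_pos. now apply ln_le'. Qed.

Lemma log2_1 : log2 1 = 0.
Proof. unfold log2; rewrite ln_1; field; apply Rgt_not_eq, ln2_pos. Qed.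

Lemma key a b M x y : 0 < a -> 0 < b -> 0 < M -> b*b*M*M >= 1 + a*M ->
  0 <= x <= M -> 0 <= y <= M ->
  (1 + b*y + a*x) * (1 + b*x + a*y) <= (1 + a*M) * (1+b*x) * (1+b*y).
Proof.
  intros Ha Hb HM Hc Hx Hy.
  set (h := fun x y => M*(1+b*x)*(1+b*y) - x - y - b*x*x - b*y*y - a*x*y).
  assert (E : M*M*h x y = (M-x)*(M-y)*h 0 0 + (M-x)*y*h 0 M + x*(M-y)*h M 0
     + x*y*h M M + M*b*y*(M-y)*M + M*M*b*x*(M-x)) by (unfold h; ring).
  assert (h0 : h 0 0 = M) by (unfold h; ring).
  assert (h1 : h 0 M = 0) by (unfold h; ring).
  assert (h2 : h M 0 = 0) by (unfold h; ring).
  assert (h3 : h M M = M*(b*b*M*M - 1 - a*M)) by (unfold h; ring).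
  rewrite h0, h1, h2, h3 in E.
  assert (0 <= h x y).
  { assert (0 <= M*M*h x y).
    { rewrite E.
      assert (0 <= M-x) by lra. assert (0 <= M-y) by lra.
      assert (0 <= b*b*M*M - 1 - a*M) by lra.
      repeat apply Rplus_le_le_0_compat; repeat apply Rmult_le_pos; lra. }
    apply Rmult_le_reg_l with (M*M); [nra|]; rewrite Rmult_0_r; lra. }
  unfold h in H. nra.
Qed.

Lemma sum_bound a b M P1 P2 : 0 < a -> 0 < b -> 0 < M -> b*b*M*M >= 1 + a*M ->
  0 <= P1 <= M -> 0 <= P2 <= M ->
  Defs.R1 a b P1 P2 + Defs.R2 a b P1 P2 <= log2 (1 + a*M).
Proof.
  intros. unfold Defs.R1, Defs.R2, log2.
  assert (A: 0 < 1 + a * P1 / (1 + b * P2)).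
  { assert (0 <= a*P1/(1+b*P2)) by (apply Rmult_le_pos; [nra| left; apply Rinv_0_lt_compat; nra]). lra. }
  assert (B: 0 < 1 + a * P2 / (1 + b * P1)).
  { assert (0 <= a*P2/(1+b*P1)) by (apply Rmult_le_pos; [nra| left; apply Rinv_0_lt_compat; nra]). lra. }
  rewrite <- Rdiv_plus_distr, <- ln_mult by auto.
  apply Rmult_le_compat_r. left; apply Rinv_0_lt_compat, ln2_pos.
  apply ln_le'. nra.
  replace ((1 + a * P1 / (1 + b * P2)) * (1 + a * P2 / (1 + b * P1)))
    with ((1 + b*P2 + a*P1) * (1 + b*P1 + a*P2) / ((1+b*P1)*(1+b*P2))) by (field; split; nra).
  assert (Q: 0 < (1+b*P1)*(1+b*P2)) by (apply Rmult_lt_0_compat; nra).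
  apply Rmult_le_reg_r with ((1+b*P1)*(1+b*P2)). exact Q.
  unfold Rdiv. rewrite Rmult_assoc, Rinv_l by lra.
  pose proof (key a b M P1 P2). nra.
Qed.

Theorem corollary3 (a b Pmax : R) :
  0 < a -> 0 < b -> 0 < Pmax ->
  b >= sqrt (1 + a * Pmax) / Pmax ->
  forall r : R * R,
    conv_hull (rate_region a b a b Pmax) r <->
    closed_triangle ((0:R), (0:R)) ((0:R), log2 (1 + a * Pmax)) (log2 (1 + a * Pmax), (0:R)) r.
Proof.
  intros Ha Hb HM Hbb.
  assert (Hc : b*b*Pmax*Pmax >= 1 + a*Pmax).
  { pose proof (sqrt_pos (1 + a*Pmax)). pose proof (sqrt_sqrt (1+a*Pmax)).
    assert (b*Pmax >= sqrt (1+a*Pmax)).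
    { apply Rle_ge. apply Rmult_le_reg_r with (/Pmax). apply Rinv_0_lt_compat; lra.
      rewrite Rmult_assoc, Rinv_r by lra. lra. }
    nra. }
  set (L := log2 (1 + a * Pmax)).
  assert (HL : 0 < L).
  { unfold L, log2. apply Rdiv_lt_0_compat; [|apply ln2_pos].
    rewrite <- ln_1. apply ln_increasing; nra. }
  intros r. split.
  - intros H.
    set (T := fun p : R*R => 0 <= fst p /\ 0 <= snd p /\ fst p + snd p <= L).
    assert (HT : T r).
    { apply H.
      - intros x y t [? [? ?]] [? [? ?]] Ht; unfold T; simpl. repeat split; nra.
      - intros q [? [? [P1 [P2 [? [? [? ?]]]]]]]. unfold T; repeat split; auto.
        pose proof (sum_bound a b Pmax P1 P2). unfold L. lra. }
    destruct r as [r1 r2]. destruct HT as [H1 [H2 H3]]; simpl in *.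
    intros C HC Hv.
    assert (C0 : C (0,0)) by (apply Hv; auto).
    assert (C1 : C (0,L)) by (apply Hv; auto).
    assert (C2 : C (L,0)) by (apply Hv; auto).
    destruct (Req_dec (r1 + r2) 0) as [E|E].
    + replace (r1, r2) with (0,0) by (f_equal; lra). auto.
    + set (s := r1 + r2).
      assert (Hs : 0 < s) by (unfold s; lra).
      assert (Cw : C (r1/s*L, r2/s*L)).
      { pose proof (HC (L,0) (0,L) (r1/s) C2 C1) as K. simpl in K.
        replace (r1/s*L, r2/s*L) with (r1 / s * L + (1 - r1 / s) * 0, r1 / s * 0 + (1 - r1 / s) * L).
        apply K. split. apply Rmult_le_pos; [lra| left; apply Rinv_0_lt_compat; lra].
        apply Rmult_le_reg_r with s; auto. unfold Rdiv; rewrite Rmult_assoc, Rinv_l by lra; unfold s; lra.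
        f_equal; unfold s; field; lra. }
      pose proof (HC _ _ (s/L) Cw C0) as K. simpl in K.
      replace (r1, r2) with (s / L * (r1 / s * L) + (1 - s / L) * 0, s / L * (r2 / s * L) + (1 - s / L) * 0).
      apply K. split. apply Rmult_le_pos; [lra| left; apply Rinv_0_lt_compat; lra].
      apply Rmult_le_reg_r with L; auto. unfold Rdiv; rewrite Rmult_assoc, Rinv_l by lra; unfold s; lra.
      f_equal; field; split; lra.
  - intros H. apply H.
    + intros x y t Hx Hy Ht C HC HS. apply HC; [apply Hx; auto|apply Hy; auto|exact Ht].
    + intros q Hq C HC HS. apply HS.
      destruct Hq as [Hq|[Hq|Hq]]; rewrite Hq; unfold rate_region; simpl; repeat split; try lra.
      * exists 0, 0. repeat split; try lra; unfold Defs.R1, Defs.R2;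
        replace (1 + a * 0 / (1 + b * 0)) with 1 by field; rewrite log2_1; lra.
      * exists 0, Pmax. repeat split; try lra; unfold Defs.R1, Defs.R2.
        replace (1 + a * 0 / (1 + b * Pmax)) with 1 by (field; nra); rewrite log2_1; lra.
        replace (1 + a * Pmax / (1 + b * 0)) with (1 + a*Pmax) by field; fold L; lra.
      * exists Pmax, 0. repeat split; try lra; unfold Defs.R1, Defs.R2.
        replace (1 + a * Pmax / (1 + b * 0)) with (1 + a*Pmax) by field; fold L; lra.
        replace (1 + a * 0 / (1 + b * Pmax)) with 1 by (field; nra); rewrite log2_1; lra.
Qed.
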